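(* For every state $\rho$ on $\mathbb{C}^M\otimes\mathbb{C}^N$ and all unitaries $U_1$ on $\mathbb{C}^M$ and $U_2$ on $\mathbb{C}^N$, $d_{\max}\big((U_1\otimes U_2)\rho(U_1\otimes U_2)^\dagger\big)=d_{\max}(\rho)$.
   Context: For a state $\rho$ on $\mathbb{C}^M\otimes\mathbb{C}^N$ let $\rho_B=\mathrm{Tr}_A(\rho)$. A unitary $U^B$ on $\mathbb{C}^N$ is called cyclic for $\rho$ if $[\rho_B,U^B]=0$. Set $\rho_f=(I\otimes U^B)\rho(I\otimes U^{B\dagger})$ and define the Fu distance $d(\rho,U^B)=\frac{1}{\sqrt2}\|\rho-\rho_f\|_F$ (Frobenius norm $\|X\|_F=\sqrt{\mathrm{Tr}(X^\dagger X)}$). Define $d_{\max}(\rho)=\max\{d(\rho,U^B): U^B \text{ unitary},\ [\rho_B,U^B]=0\}$. *)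

(* Defs.v *)
From HB Require Import structures.
From mathcomp Require Import all_boot all_order all_algebra.
From mathcomp Require Import boolp classical_sets reals.
From mathcomp Require Import complex mxtens.

Set Implicit Arguments.
Unset Strict Implicit.
Unset Printing Implicit Defensive.

Import Order.TTheory GRing.Theory Num.Theory.
Local Open Scope ring_scope.
Local Open Scope classical_set_scope.

Section QDefs.
Variable R : realType.
Local Notation C := (R[i]).

Definition adj {m n : nat} (A : 'M[C]_(m, n)) : 'M[C]_(n, m) :=
  (map_mx Num.conj A)^T.

Definition unitary {n : nat} (U : 'M[C]_n) : Prop :=
  adj U *m U = 1%:M /\ U *m adj U = 1%:M.

Definition is_state {n : nat} (rho : 'M[C]_n) : Prop :=
  [/\ adj rho = rho,
      (forall v : 'cV[C]_n, 0 <= (adj v *m rho *m v) 0 0)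
    & \tr rho = 1].

(* partial trace over the first factor C^M of C^M (x) C^N,
   with the Kronecker-product index convention of tensmx *)
Definition ptraceA {M N : nat} (rho : 'M[C]_(M * N)) : 'M[C]_N :=
  \matrix_(j, l) \sum_(i < M) rho (mxtens_index (i, j)) (mxtens_index (i, l)).

Definition frob {n : nat} (X : 'M[C]_n) : R :=
  Num.sqrt (complex.Re (\tr (adj X *m X))).

Definition fu_dist {M N : nat} (rho : 'M[C]_(M * N)) (U : 'M[C]_N) : R :=
  let rho_f := (1%:M *t U) *m rho *m adj (1%:M *t U) in
  frob (rho - rho_f) / Num.sqrt 2.

(* d_max(rho) = max of d(rho,U) over unitaries U commuting with rho_B
   (the set is nonempty and compact, so the sup is attained) *)
Definition dmax {M N : nat} (rho : 'M[C]_(M * N)) : R :=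
  sup [set fu_dist rho U | U in
        [set U : 'M[C]_N | unitary U /\ ptraceA rho *m U = U *m ptraceA rho]].

End QDefs.

(* Main.v *)
Require Import Defs.
From HB Require Import structures.
From mathcomp Require Import all_boot all_order all_algebra.
From mathcomp Require Import boolp classical_sets reals.
From mathcomp Require Import complex mxtens ring.
Import Order.TTheory GRing.Theory Num.Theory.
Local Open Scope ring_scope.

Section S.
Variable R : realType.
Local Notation C := (R[i]).
Lemma sum_tens (V : nmodType) m n (F : 'I_(m*n) -> V) :
  \sum_(k < m * n) F k = \sum_(a < m) \sum_(b < n) F (mxtens_index (a, b)).
Proof.
rewrite pair_big /=.
rewrite (reindex (@mxtens_index m n)) /=; last first.
  by exists (@mxtens_unindex m n) => k _; rewrite (mxtens_indexK, mxtens_unindexK).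
by apply: eq_bigr => -[a b].
Qed.
Lemma entry m n (A E : 'M[C]_m) (B D : 'M[C]_n) (X : 'M[C]_(m * n)) i j k l :
  ((A *t B) *m X *m (E *t D)) (mxtens_index (i, j)) (mxtens_index (k, l)) =
  \sum_(c < m) \sum_(d < n) \sum_(a < m) \sum_(b < n)
     A i a * B j b * X (mxtens_index (a, b)) (mxtens_index (c, d)) * E c k * D d l.
Proof.
rewrite mxE sum_tens; apply: eq_bigr => c _; apply: eq_bigr => d _.
rewrite tensmxE mxE sum_tens !mulr_suml; apply: eq_bigr => a _.
rewrite !mulr_suml; apply: eq_bigr => b _.
by rewrite tensmxE !mulrA.
Qed.
Lemma ptrace_conj m n (A E : 'M[C]_m) (B D : 'M[C]_n) (X : 'M[C]_(m * n)) :
  E *m A = 1%:M -> ptraceA ((A *t B) *m X *m (E *t D)) = B *m ptraceA X *m D.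
Proof.
move=> CA; apply/matrixP => j l; rewrite !mxE.
under eq_bigr do rewrite entry.
transitivity (\sum_(c < m) \sum_(d < n) \sum_(a < m) \sum_(b < n)
   (c == a)%:R * (B j b * X (mxtens_index (a, b)) (mxtens_index (c, d)) * D d l)).
  rewrite exchange_big; apply: eq_bigr => c _; rewrite exchange_big; apply: eq_bigr => d _.
  rewrite exchange_big; apply: eq_bigr => a _; rewrite exchange_big; apply: eq_bigr => b _.
  have -> : (c == a)%:R = (E *m A) c a :> C by rewrite CA mxE.
  rewrite mxE mulr_suml; apply: eq_bigr => i0 _; ring.
rewrite exchange_big; apply: eq_bigr => d _.
rewrite mxE mulr_suml exchange_big /=.
transitivity (\sum_(a < m) \sum_(b < n) B j b * X (mxtens_index (a, b)) (mxtens_index (a, d)) * D d l).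
  apply: eq_bigr => a _.
  rewrite (bigD1 a) //= eqxx [X in _ + X]big1 ?addr0; first by apply: eq_bigr => b _; rewrite mul1r.
  by move=> c /negbTE ->; apply: big1 => b _; rewrite mul0r.
rewrite exchange_big; apply: eq_bigr => b _.
rewrite mxE mulr_sumr mulr_suml; apply: eq_bigr => a _; ring.
Qed.
Lemma adjE m n (A : 'M[C]_(m,n)) i j : adj A i j = (A j i)^*.
Proof. by rewrite !mxE. Qed.
Lemma adjM m n p (A : 'M[C]_(m,n)) (B : 'M[C]_(n,p)) : adj (A *m B) = adj B *m adj A.
Proof. by rewrite /adj map_mxM trmx_mul. Qed.
Lemma adjK m n (A : 'M[C]_(m,n)) : adj (adj A) = A.
Proof. by apply/matrixP => i j; rewrite !adjE conjCK. Qed.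
Lemma adjB m n (A B : 'M[C]_(m,n)) : adj (A - B) = adj A - adj B.
Proof. by apply/matrixP => i j; rewrite !mxE rmorphB. Qed.
Lemma adj1 n : adj (1%:M : 'M[C]_n) = 1%:M.
Proof. by apply/matrixP => i j; rewrite !mxE eq_sym rmorph_nat. Qed.
Lemma adjT m n p q (A : 'M[C]_(m,n)) (B : 'M[C]_(p,q)) : adj (A *t B) = adj A *t adj B.
Proof.
apply/matrixP => i j.
case: (mxtens_indexP i) => a b; case: (mxtens_indexP j) => c d.
by rewrite adjE !tensmxE !adjE rmorphM.
Qed.
Lemma tens11 m n : (1%:M : 'M[C]_m) *t (1%:M : 'M[C]_n) = 1%:M.
Proof.
apply/matrixP => i j.
case: (mxtens_indexP i) => a b; case: (mxtens_indexP j) => c d.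
rewrite tensmxE !mxE -natrM (inj_eq (can_inj (@mxtens_indexK _ _))).
by rewrite xpair_eqE mulnb.
Qed.

Lemma unitary_adj n (U : 'M[C]_n) : unitary U -> unitary (adj U).
Proof. by case=> h1 h2; split; rewrite adjK. Qed.
Lemma unitary_tens m n (U1 : 'M[C]_m) (U2 : 'M[C]_n) :
  unitary U1 -> unitary U2 -> unitary (U1 *t U2).
Proof.
case=> a1 a2 [b1 b2]; split; rewrite adjT tensmx_mul.
  by rewrite a1 b1 tens11.
by rewrite a2 b2 tens11.
Qed.
Lemma frob_conj n (W X : 'M[C]_n) : unitary W -> frob (W *m X *m adj W) = frob X.
Proof.
case=> h1 h2; rewrite /frob !adjM adjK.
congr (Num.sqrt (complex.Re _)).
rewrite !mulmxA -[W *m adj X *m adj W *m W](mulmxA) h1 mulmx1.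
by rewrite -!mulmxA mxtrace_mulC -!mulmxA h1 mulmx1.
Qed.

Local Open Scope classical_set_scope.
Definition dset {m n} (r : 'M[C]_(m * n)) :=
  [set fu_dist r U | U in
        [set U : 'M[C]_n | unitary U /\ ptraceA r *m U = U *m ptraceA r]].

Lemma dset_sub m n (r : 'M[C]_(m * n)) (U1 : 'M[C]_m) (U2 : 'M[C]_n) :
  unitary U1 -> unitary U2 -> dset ((U1 *t U2) *m r *m adj (U1 *t U2)) `<=` dset r.
Proof.
move=> hU1 hU2; have [a1 a2] := hU1; have [b1 b2] := hU2.
set W := U1 *t U2.
have hW : unitary W by apply: unitary_tens.
have hP : ptraceA (W *m r *m adj W) = U2 *m ptraceA r *m adj U2.
  by rewrite /W adjT ptrace_conj.
move=> x [V [uV cV] <-].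
set V' := adj U2 *m V *m U2.
rewrite /dset /=; exists V'; first split.
- have [v1 v2] := uV.
  have eV : adj V' = adj U2 *m adj V *m U2 by rewrite /V' !adjM adjK mulmxA.
  split; rewrite eV /V' !mulmxA.
    rewrite -[adj U2 *m adj V *m U2 *m adj U2]mulmxA b2 mulmx1.
    by rewrite -[adj U2 *m adj V *m V]mulmxA v1 mulmx1 b1.
  rewrite -[adj U2 *m V *m U2 *m adj U2]mulmxA b2 mulmx1.
  by rewrite -[adj U2 *m V *m adj V]mulmxA v2 mulmx1 b1.
- rewrite hP in cV.
  rewrite /V'.
  transitivity (adj U2 *m ((U2 *m ptraceA r *m adj U2) *m V) *m U2).
    by rewrite !mulmxA b1 mul1mx.
  rewrite cV !mulmxA -[adj U2 *m V *m U2 *m ptraceA r *m adj U2 *m U2]mulmxA b1 mulmx1.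
  by [].
- symmetry.
  set T := (1%:M : 'M[C]_m) *t V; set T' := (1%:M : 'M[C]_m) *t V'.
  have TW : T *m W = W *m T'.
    by rewrite /T /T' /W !tensmx_mul mul1mx mulmx1 /V' !mulmxA b2 mul1mx.
  have E : W *m r *m adj W - T *m (W *m r *m adj W) *m adj T
         = W *m (r - T' *m r *m adj T') *m adj W.
    rewrite mulmxBr mulmxBl; congr (_ - _).
    have -> : T *m (W *m r *m adj W) *m adj T = (T *m W) *m r *m adj (T *m W).
      by rewrite adjM !mulmxA.
    have -> : W *m (T' *m r *m adj T') *m adj W = (W *m T') *m r *m adj (W *m T').
      by rewrite adjM !mulmxA.
    by rewrite TW.
  rewrite /fu_dist /= -/T -/T' E frob_conj //.
Qed.
End S.


Theorem lemma2 (R : realType) (M N : nat) (rho : 'M[R[i]]_(M * N))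
  (U1 : 'M[R[i]]_M) (U2 : 'M[R[i]]_N) :
  is_state rho -> unitary U1 -> unitary U2 ->
  dmax ((U1 *t U2) *m rho *m adj (U1 *t U2)) = dmax rho.
Proof.
move=> _ hU1 hU2.
have [w1 w2] := @unitary_tens R _ _ _ _ hU1 hU2.
have H : @dset R _ _ ((U1 *t U2) *m rho *m adj (U1 *t U2)) = @dset R _ _ rho.
  apply/seteqP; split; first exact: (@dset_sub R _ _ rho _ _ hU1 hU2).
  have := @dset_sub R _ _ ((U1 *t U2) *m rho *m adj (U1 *t U2)) _ _ (@unitary_adj R _ _ hU1) (@unitary_adj R _ _ hU2).
  rewrite -(@adjT R) adjK !mulmxA w1 mul1mx -mulmxA w1 mulmx1.
  by [].
exact: (congr1 sup H).
Qed.
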